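(* Let $G=(V,E)$ be a graph, $v\in V$, and $F$ a set of $k$ new edges (pairs not in $E$), with $\bar G=(V,E\cup F)$. Then $$LCC_{\bar G}(v)\le \overline{LCC}(v,k):=\max_{k_1+k_2=k}\ \frac{n_v+k_2+k_1\, d_G(v)+\binom{k_1}{2}}{\binom{d_G(v)+k_1}{2}},$$ where the maximum is over nonnegative integers $k_1,k_2$ with $k_1+k_2=k$, and $n_v=LCC_G(v)\binom{d_G(v)}{2}$ is the number of edges of $G$ between neighbors of $v$.
   Context: $G=(V,E)$ is a simple undirected graph; $N_G(v)$ is the neighbor set and $d_G(v)=|N_G(v)|$ the degree of $v$; $LCC_G(v)=\frac{|\{(i,j): i,j\in N_G(v),\ (i,j)\in E\}|}{\binom{d_G(v)}{2}}$ is the local clustering coefficient. *)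

(* Defs.v *)
(* A simple undirected graph on a finite vertex type T is
   given by its edge set E : {set {set T}} whose elements are 2-subsets. *)
From mathcomp Require Import all_boot all_order all_algebra.
Set Implicit Arguments. Unset Strict Implicit. Unset Printing Implicit Defensive.
Import Order.TTheory GRing.Theory Num.Theory.
Local Open Scope ring_scope.

Section Graph.
Variable T : finType.

Definition simple_edges (E : {set {set T}}) : Prop :=
  forall e, e \in E -> #|e| = 2%N.

Definition nbhd (E : {set {set T}}) (v : T) : {set T} :=
  [set u | [set v; u] \in E].

Definition deg (E : {set {set T}}) (v : T) : nat := #|nbhd E v|.

Definition nbhd_edges (E : {set {set T}}) (v : T) : nat :=
  #|[set e in E | e \subset nbhd E v]|.

(* local clustering coefficient (division by 0 yields 0, the usual MathComp
   convention; only relevant when d_G(v) < 2) *)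
Definition LCC (R : fieldType) (E : {set {set T}}) (v : T) : R :=
  (nbhd_edges E v)%:R / ('C(deg E v, 2))%:R.

Definition nv (R : fieldType) (E : {set {set T}}) (v : T) : R :=
  LCC R E v * ('C(deg E v, 2))%:R.

Definition LCC_bound (R : realFieldType) (E : {set {set T}}) (v : T) (k : nat) : R :=
  \big[Num.max/0]_(k1 < k.+1)
     ((nv R E v + (k - k1)%N%:R + (k1 * deg E v)%N%:R + ('C(k1, 2))%:R)
        / ('C(deg E v + k1, 2)%N)%:R).
End Graph.

(* Main.v *)
Require Import Defs.
From mathcomp Require Import all_boot all_order all_algebra.
From mathcomp Require Import zify.
Import Order.TTheory GRing.Theory Num.Theory.
Local Open Scope ring_scope.

Lemma key (T : finType) (E F : {set {set T}}) (v : T) (k : nat) :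
  simple_edges E -> simple_edges F ->
  [disjoint F & E] -> #|F| = k ->
  exists k1, [/\ (k1 <= k)%N, deg (E :|: F) v = (deg E v + k1)%N &
    (nbhd_edges (E :|: F) v <= nbhd_edges E v + (k - k1) + (k1 * deg E v + 'C(k1, 2)))%N].
Proof.
move=> sE sF dFE cF.
set N := nbhd E v; set N' := nbhd (E :|: F) v.
have NN' : N \subset N'.
  by apply/subsetP=> u; rewrite !inE => ->.
have vN' : v \notin N'.
  rewrite inE; apply/negP=> /setUP [] /[dup] h.
    by move=> /sE; rewrite cards2 eqxx.
  by move=> /sF; rewrite cards2 eqxx.
have vN : v \notin N by apply: contra vN' => /(subsetP NN').
set k1 := #|N' :\: N|.
have cN' : #|N'| = (#|N| + k1)%N.
  by rewrite -(cardsID N N') (setIidPr NN') .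
set Vv := [set e : {set T} | v \in e].
have Im : [set [set v; u] | u in N' :\: N] \subset F :&: Vv.
  apply/subsetP=> e /imsetP [u]; rewrite !inE => /andP [uN uN'] ->.
  rewrite set21 andbT.
  by case/orP: uN' => //; rewrite (negbTE uN).
have cIm : #|[set [set v; u] | u in N' :\: N]| = k1.
  apply: card_in_imset => u w /setDP [uN' _] /setDP [wN' _] h.
  have : u \in [set v; w] by rewrite -h set22.
  rewrite !inE => /orP [/eqP huv|/eqP //].
  by subst u; rewrite uN' in vN'.
have ck1 : (k1 <= #|F :&: Vv|)%N by rewrite -cIm subset_leq_card.
have cFV := cardsID Vv F.
set S1 := [set e in E | e \subset N].
set S2 := F :\: Vv.
set P2 := fun X : {set T} => [set A : {set T} | A \subset X & #|A| == 2%N].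
have P2s : P2 N \subset P2 N'.
  apply/subsetP=> A; rewrite !inE => /andP [h ->]; rewrite andbT.
  exact: subset_trans h NN'.
have cP2 : #|P2 N' :\: P2 N| = ('C(#|N'|, 2) - 'C(#|N|, 2))%N.
  by rewrite cardsD (setIidPr P2s) !cards_draws.
have incl : [set e in E :|: F | e \subset N'] \subset S1 :|: S2 :|: (P2 N' :\: P2 N).
  apply/subsetP=> e; rewrite !inE => /andP [eEF eN'].
  have ce : #|e| = 2%N by case/orP: eEF => [/sE|/sF].
  case eN: (e \subset N).
    case/orP: eEF => [-> //|eF].
    rewrite eF andbT; apply/orP; left; apply/orP; right.
    by rewrite andbT; apply: contra vN => /(subsetP eN).
  by rewrite eN' ce eqxx !orbT.
have hle := subset_leq_card incl.
rewrite !cardsU in hle.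
have hV : 'C(#|N| + k1, 2) = ('C(#|N|, 2) + k1 * #|N| + 'C(k1, 2))%N.
  rewrite -binomial.Vandermonde !big_ord_recr big_ord0 /= !bin0 !bin1.
  rewrite subn0; lia.
exists k1; split.
- by rewrite -cF -cFV; apply: leq_trans ck1 (leq_addr _ _).
- by rewrite /deg -/N -/N' cN'.
- rewrite /nbhd_edges -/N -/N' /deg -/N.
  rewrite cP2 cN' hV in hle.
  have hS2 : (#|S2| <= k - k1)%N.
    rewrite -cF -cFV; move: ck1; rewrite /S2.
    move: (#|F :&: Vv|) (#|F :\: Vv|) => a b; lia.
  move: hle hS2; rewrite -/S1.
  move: #|S1| #|S2| (#|_ :&: S2|) (#|_ :&: (P2 N' :\: P2 N)|) => a b c d.
  lia.
Qed.

Theorem theorem3 (R : realFieldType) (T : finType) (E F : {set {set T}})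
    (v : T) (k : nat) :
  simple_edges E -> simple_edges F ->
  [disjoint F & E] -> #|F| = k ->
  LCC R (E :|: F) v <= LCC_bound R E v k.
Proof.
move=> sE sF dFE cF.
have [k1 [hk1 hdeg hne]] := @key T E F v k sE sF dFE cF.
have hk1' : (k1 < k.+1)%N by [].
apply: le_trans (le_bigmax _ _ (Ordinal hk1')) => /=.
have nvE : nv R E v = (nbhd_edges E v)%:R.
  rewrite /nv /LCC.
  have [C0|C0] := eqVneq ('C(deg E v, 2)) 0%N.
    suff -> : nbhd_edges E v = 0%N by rewrite C0 !mul0r.
    apply/eqP; rewrite cards_eq0; apply/eqP/setP => e; rewrite !inE.
    apply/negP => /andP [eE eN].
    have := subset_leq_card eN; rewrite sE // => h2.
    have hb := bin_gt0 (deg E v) 2; rewrite C0 ltnn in hb.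
    by move: h2; rewrite -[#|nbhd E v|]/(deg E v) -hb.
  by rewrite divfK // pnatr_eq0.
rewrite nvE /LCC hdeg -!natrD.
apply: ler_wpM2r; first by rewrite invr_ge0 ler0n.
rewrite ler_nat; lia.
Qed.
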